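(* Let $m \geq 0$, $n \geq 1$ be integers and let $c = (c^t; c^b)$ be a sorted deterministically recurrent configuration on $K_{m,n}^0$. Let $k_j := |\{ i \in \{1,\ldots,m\} : c^t_i < j\}|$ for $j \in \{1,\ldots,n\}$, and let $(F_1, F_2) := (F(k), F(c^b))$. Then $\mathrm{Diff}(F_1, F_2) = \Phi(c)$; that is, $\Phi = \mathrm{Diff} \circ \Psi$ on sorted deterministically recurrent configurations, where $\Psi(c) := (F(k), F(c^b))$.
   Context: $K_{m,n}^0$ is the complete bipartite graph with ''top'' vertices $v^t_0, \ldots, v^t_m$ and ''bottom'' vertices $v^b_1, \ldots, v^b_n$, with an edge between every top and every bottom vertex; $v^t_0$ is the sink. A configuration is a vector $c = (c^t_1, \ldots, c^t_m; c^b_1, \ldots, c^b_n)$ of non-negative integers; it is sorted if $c^t$, $c^b$ are weakly increasing, stable if $c^t_i < n$ and $c^b_j < m+1$ for all $i,j$. Abelian sandpile model (ASM): an unstable non-sink vertex topples by sending one grain to each neighbour (bottom vertices also to the sink); grains sent to the sink disappear. In the Markov chain on stable configurations which adds a grain to a uniformly random non-sink vertex and stabilises by the ASM, a stable configuration is deterministically recurrent if it is a recurrent state. Ferrers diagrams: for a weakly increasing sequence $s=(s_1,\ldots,s_r)$ of non-negative integers, $F(s)$ is the left-aligned diagram with $s_i$ unit cells in row $i$, rows numbered from bottom to top; we place it with its bottom-left corner at the origin, so row $i$ occupies cells $[x-1,x]\times[i-1,i]$ for $1 \le x \le s_i$. For $F_1 = F(s)$ and $F_2 = F(s')$ with $s,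 s'$ of length $n$ and $s_n = s'_n = m$: let $F_1' := F(0, s_1, \ldots, s_{n-1}, s_n + 1)$ (add an empty row at the bottom and one cell to the top row) and $F_2' := F(s'_1 + 1, \ldots, s'_n + 1, m+1)$ (add one cell to each row and a full row of $m+1$ cells at the top). $\mathrm{Diff}(F_1,F_2) := F_2' \setminus F_1'$ is the set of unit cells of $F_2'$ not in $F_1'$. A parallelogram polyomino in the box $[0,m+1]\times[0,n]$ is the set of unit cells lying between two lattice paths $\mathcal{U}$ (upper) and $\mathcal{L}$ (lower) from $(0,0)$ to $(m+1,n)$ with steps $N=(0,1)$, $E=(1,0)$, which meet only at their endpoints. The Dukes–Le Borgne map $\Phi$: for a sorted stable $c$, $\mathcal{U}(c^t)$ is the path from $(0,0)$ to $(m+1,n)$ whose $E$ steps occur at heights $1+c^t_1, \ldots, 1+c^t_m, n$ (in this order), and $\mathcal{L}(c^b)$ is the path from $(0,0)$ to $(m+1,n)$ whose $N$ steps occur at $x$-coordinates $1+c^b_1, \ldots, 1+c^b_n$; $\Phi(c)$ is the set of unit cells between $\mathcal{U}(c^t)$ and $\mathcal{L}(c^b)$. It is known that $\Phi$ is a bijection from sorted deterministically recurrent configurations on $K_{m,n}^0$ to parallelogram polyominoes with bounding box $[0,m+1]\times[0,n]$. *)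

(* Defs.v *)
From mathcomp Require Import all_boot.
Set Implicit Arguments. Unset Strict Implicit. Unset Printing Implicit Defensive.

(* Configurations on K_{m,n}^0.  Top non-sink vertices v^t_1..v^t_m are
   indexed by 'I_m (v^t_{i+1} <-> i), bottom vertices v^b_1..v^b_n by 'I_n.
   The sink v^t_0 carries no grains. *)
Definition config (m n : nat) := ({ffun 'I_m -> nat} * {ffun 'I_n -> nat})%type.

Definition ctop m n (c : config m n) : 'I_m -> nat := c.1.
Definition cbot m n (c : config m n) : 'I_n -> nat := c.2.

Definition stable m n (c : config m n) : bool :=
  [forall i, ctop c i < n] && [forall j, cbot c j < m.+1].

Definition sorted_config m n (c : config m n) : Prop :=
  (forall i j : 'I_m, i <= j -> ctop c i <= ctop c j) /\
  (forall i j : 'I_n, i <= j -> cbot c i <= cbot c j).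

Definition topple_top m n (c : config m n) (i : 'I_m) : config m n :=
  ([ffun i' => if i' == i then ctop c i' - n else ctop c i'],
   [ffun j => (cbot c j).+1]).

(* Toppling a bottom vertex (degree m+1): one grain to every top vertex,
   the grain sent to the sink disappears. *)
Definition topple_bot m n (c : config m n) (j : 'I_n) : config m n :=
  ([ffun i => (ctop c i).+1],
   [ffun j' => if j' == j then cbot c j' - m.+1 else cbot c j']).

Inductive topple_step m n (c : config m n) : config m n -> Prop :=
| TStepTop (i : 'I_m) : n <= ctop c i -> topple_step c (topple_top c i)
| TStepBot (j : 'I_n) : m.+1 <= cbot c j -> topple_step c (topple_bot c j).

Inductive rtclos (T : Type) (R : T -> T -> Prop) (x : T) : T -> Prop :=
| rt_refl : rtclos R x x
| rt_step (y z : T) : rtclos R x y -> R y z -> rtclos R x z.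

Definition stabilises_to m n (c c' : config m n) : Prop :=
  rtclos (@topple_step m n) c c' /\ stable c'.

Definition add_grain m n (c : config m n) (v : 'I_m + 'I_n) : config m n :=
  match v with
  | inl i => ([ffun i' => if i' == i then (ctop c i').+1 else ctop c i'], c.2)
  | inr j => (c.1, [ffun j' => if j' == j then (cbot c j').+1 else cbot c j'])
  end.

(* Positive-probability transitions of the Markov chain on stable
   configurations (each non-sink vertex is chosen with probability
   1/(m+n) > 0). *)
Definition mc_step m n (c c' : config m n) : Prop :=
  stable c /\ exists v, stabilises_to (add_grain c v) c'.

(* A state of the finite Markov chain is recurrent iff every state
   reachable from it can reach it back. *)
Definition det_recurrent m n (c : config m n) : Prop :=
  stable c /\
  forall c', rtclos (@mc_step m n) c c' -> rtclos (@mc_step m n) c' c.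

(* Cells: the unit cell [x-1,x] x [y-1,y] is denoted by (x, y), x, y >= 1. *)

(* Ferrers diagram F(s): row i (1-based) has s_i cells. *)
Definition ferrers (s : seq nat) (x y : nat) : bool :=
  [&& 1 <= y, y <= size s, 1 <= x & x <= nth 0 s y.-1].

Definition F1prime (s : seq nat) : seq nat :=
  0 :: take (size s).-1 s ++ [:: (last 0 s).+1].
Definition F2prime (m : nat) (s' : seq nat) : seq nat :=
  map succn s' ++ [:: m.+1].

Definition Diff (m : nat) (s s' : seq nat) (x y : nat) : bool :=
  ferrers (F2prime m s') x y && ~~ ferrers (F1prime s) x y.

Definition k_seq m n (c : config m n) : seq nat :=
  [seq #|[pred i : 'I_m | ctop c i < j]| | j <- iota 1 n].
Definition cbot_seq m n (c : config m n) : seq nat :=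
  [seq cbot c j | j <- enum 'I_n].

(* Upper path U(c^t): its x-th E step (x = 1..m+1), spanning [x-1,x],
   is at height (upper_heights c)_x = 1 + c^t_x for x <= m, and n for x = m+1. *)
Definition upper_heights m n (c : config m n) : seq nat :=
  [seq (ctop c i).+1 | i <- enum 'I_m] ++ [:: n].
(* Lower path L(c^b): its y-th N step (y = 1..n), spanning [y-1,y],
   is at x-coordinate 1 + c^b_y. *)
Definition lower_xs m n (c : config m n) : seq nat :=
  [seq (cbot c j).+1 | j <- enum 'I_n].

(* Phi(c): the cells in the box [0,m+1]x[0,n] lying below U (y <= height of
   U over column x) and to the left of / above L (x <= x-coordinate of L's
   vertical step in row y). *)
Definition Phi m n (c : config m n) (x y : nat) : bool :=
  [&& 1 <= x, x <= m.+1, 1 <= y, y <= n,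
      y <= nth 0 (upper_heights c) x.-1 & x <= nth 0 (lower_xs c) y.-1].

(* Main.v *)
Require Import Defs.
From mathcomp Require Import all_boot.
From mathcomp Require Import zify.

Lemma Kkey m (f : 'I_m -> nat) (srt : forall i j : 'I_m, i <= j -> f i <= f j)
  j (i : 'I_m) : (#|[pred i' : 'I_m | f i' < j]| <= i) = (j <= f i).
Proof.
have hi : i <= m by apply: ltnW.
case: (leqP j (f i)) => h.
- apply: (@leq_trans #|[set widen_ord hi k | k : 'I_i]|); last first.
    by rewrite (leq_trans (leq_imset_card _ _)) // card_ord.
  apply: subset_leq_card; apply/subsetP => i' /=; rewrite inE => hi'.
  have lt : i' < i.
    rewrite ltnNge; apply/negP => le; move: (srt _ _ le) => h2; lia.
  by apply/imsetP; exists (Ordinal lt) => //; apply: val_inj.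
- apply/negbTE; rewrite -ltnNge.
  have hi1 : i.+1 <= m by [].
  apply: (@leq_trans #|[set widen_ord hi1 k | k : 'I_i.+1]|).
    by rewrite card_imset ?card_ord //; move=> a b /(congr1 val) /= ab; apply: val_inj.
  apply: subset_leq_card; apply/subsetP => i' /imsetP [k _ ->]; rewrite inE /=.
  have le : widen_ord hi1 k <= i by rewrite /= -ltnS.
  by move: (srt _ _ le) => h2; lia.
Qed.

Theorem theorem4p9 (m n : nat) (c : config m n) :
  1 <= n -> sorted_config c -> det_recurrent c ->
  forall x y : nat, Diff m (k_seq c) (cbot_seq c) x y = Phi c x y.
Proof.
move=> n1 [st _] [stc _] x y.
move: stc => /andP[/forallP ht /forallP hb].
set K := fun j => #|[pred i : 'I_m | ctop c i < j]|.
have Kle : forall j, K j <= m by move=> j; rewrite /K (leq_trans (max_card _)) ?card_ord.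
have Kn : K n = m.
  rewrite /K -[RHS]card_ord; apply: eq_card => i; rewrite !inE; exact: ht.
have K0 : K 0 = 0 by rewrite /K; apply: eq_card0 => i; rewrite !inE.
have sk : size (k_seq c) = n by rewrite /k_seq size_map size_iota.
have nk : forall j, j < n -> nth 0 (k_seq c) j = K j.+1.
  by move=> j hj; rewrite /k_seq (nth_map 0) ?size_iota // nth_iota // add1n.
have F1 : forall j, j < n -> nth 0 (F1prime (k_seq c)) j = K j.
  move=> [|j] hj //; rewrite /F1prime /= nth_cat size_takel sk ?leq_pred //.
  have hj' : j < n.-1 by lia.
  by rewrite hj' nth_take // nk //; lia.
have F1n : nth 0 (F1prime (k_seq c)) n = m.+1.
  have cons_nth : forall (a : nat) s, nth 0 (a :: s) n = nth 0 s n.-1.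
    by move=> a s; case: (n) n1.
  rewrite /F1prime sk cons_nth nth_cat size_takel ?sk ?leq_pred // ltnn subnn /=.
  rewrite -nth_last sk nk ?prednK //; lia.
have sF1 : size (F1prime (k_seq c)) = n.+1.
  by rewrite /F1prime /= size_cat size_takel sk ?leq_pred //= addn1 prednK.
have sF2 : size (F2prime m (cbot_seq c)) = n.+1.
  by rewrite /F2prime size_cat size_map /cbot_seq size_map size_enum_ord addn1.
have F2 : forall j (hj : j < n), nth 0 (F2prime m (cbot_seq c)) j = (cbot c (Ordinal hj)).+1.
  move=> j hj; rewrite /F2prime nth_cat size_map /cbot_seq size_map size_enum_ord hj.
  rewrite (nth_map 0) ?size_map ?size_enum_ord //; last by rewrite -enumT size_enum_ord.
  by rewrite (nth_map (Ordinal hj)) ?size_enum_ord // (nth_ord_enum (Ordinal hj) (Ordinal hj)).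
have F2n : nth 0 (F2prime m (cbot_seq c)) n = m.+1.
  by rewrite /F2prime nth_cat size_map /cbot_seq size_map size_enum_ord ltnn subnn.
have LX : forall j (hj : j < n), nth 0 (lower_xs c) j = (cbot c (Ordinal hj)).+1.
  move=> j hj; rewrite /lower_xs (nth_map (Ordinal hj)) ?size_enum_ord //.
  by rewrite (nth_ord_enum (Ordinal hj) (Ordinal hj)).
have UH : forall i (hi : i < m), nth 0 (upper_heights c) i = (ctop c (Ordinal hi)).+1.
  move=> i hi; rewrite /upper_heights nth_cat size_map size_enum_ord hi.
  rewrite (nth_map (Ordinal hi)) ?size_enum_ord //.
  by rewrite (nth_ord_enum (Ordinal hi) (Ordinal hi)).
have UHm : nth 0 (upper_heights c) m = n.
  by rewrite /upper_heights nth_cat size_map size_enum_ord ltnn subnn.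
rewrite /Diff /ferrers /Phi sF1 sF2.
case: y => [|y]; first by rewrite /= !andbF.
case: (ltngtP y n) => [hy|hy|->].
- rewrite F1 // F2 LX.
  have hbj := hb (Ordinal hy).
  case: x => [|x]; first by rewrite /= !andbF.
  rewrite /= ltnS (ltnW hy) /= -leqNgt.
  have cbm : cbot c (Ordinal hy) <= m by [].
  case: (ltngtP x m) => [hx|hx|->].
  + rewrite UH /= (ltnS x m) (ltnW hx) (ltnS y) /= /K (@Kkey _ _ st y (Ordinal hx)) /=.
    by rewrite andbC.
  + have -> : (x < (cbot c (Ordinal hy)).+1) = false by lia.
    by rewrite !andbF.
  + by rewrite UHm hy (Kle y) /= ltnSn andbT.
- have h1 : (y < n.+1) = false by lia.
  have h2 : (y < n) = false by lia.
  by rewrite /= h1 ?h2 !andbF.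
- rewrite /= F1n F2n ?ltnn !andbF.
  by rewrite andbN.
Qed.
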